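(* Let $K$ be a compact line and let $G:K\to\mathbb{R}$ be an amenable function. Then $\lim_{y\searrow 0_K}L_G(y)=G(0_K)$.
   Context: A compact line is a compact space $K$ whose topology is the order topology of a linear order on $K$; $0_K$ and $1_K$ denote its minimum and maximum, and $0_K<1_K$. A point $x\in(0_K,1_K]$ is left-isolated if it has an immediate predecessor $x^-$ and left-dense otherwise; $x\in[0_K,1_K)$ is right-dense if it has no immediate successor. $G$ is regulated if for every left-dense $x$ the limit $\lim_{y\nearrow x}G(y)$ exists and for every right-dense $x$, $\lim_{y\searrow x}G(y)=G(x)$; $G$ is amenable if it is regulated and right-continuous. For regulated $G$, $L_G(0_K)=0$, $L_G(x)=\lim_{y\nearrow x}G(y)$ if $x\in(0_K,1_K]$ is left-dense, and $L_G(x)=G(x^-)$ if $x$ is left-isolated. The limit $y\searrow 0_K$ is along $y>0_K$ decreasing to $0_K$. *)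

(* Defs.v *)
From HB Require Import structures.
From mathcomp Require Import all_boot all_order all_algebra.
From mathcomp Require Import all_classical all_reals all_analysis.
Set Implicit Arguments. Unset Strict Implicit. Unset Printing Implicit Defensive.
Import Order.TTheory GRing.Theory Num.Theory.
Import numFieldNormedType.Exports.
Local Open Scope classical_set_scope.
Local Open Scope order_scope.

Section CompactLine.
Context {d : Order.disp_t} {K : orderTopologicalType d} {R : realType}.

Definition is_pred (p x : K) : Prop := p < x /\ forall y : K, ~ (p < y /\ y < x).
Definition is_succ (s x : K) : Prop := x < s /\ forall y : K, ~ (x < y /\ y < s).

(* a = 0_K, b = 1_K *)
Definition left_isolated (a : K) (x : K) : Prop := a < x /\ exists p, is_pred p x.
Definition left_dense (a : K) (x : K) : Prop := a < x /\ ~ (exists p, is_pred p x).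
Definition right_dense (b : K) (x : K) : Prop := x < b /\ ~ (exists s, is_succ s x).

Definition left_filter (x : K) := within [set y | y < x] (nbhs x).
Definition right_filter (x : K) := within [set y | x < y] (nbhs x).

Definition regulated (a b : K) (G : K -> R) : Prop :=
  (forall x, left_dense a x -> cvg (G @ left_filter x)) /\
  (forall x, right_dense b x -> G @ right_filter x --> G x).

Definition right_continuous (b : K) (G : K -> R) : Prop :=
  forall x, x < b -> G @ right_filter x --> G x.

Definition amenable (a b : K) (G : K -> R) : Prop :=
  regulated a b G /\ right_continuous b G.

Definition LG (a : K) (G : K -> R) (x : K) : R :=
  if x == a then 0%R
  else if pselect (exists p, is_pred p x) is left _ then G (xget a [set p | is_pred p x])
  else lim (G @ left_filter x).

End CompactLine.

(* Main.v *)
Require Import Defs.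
From HB Require Import structures.
From mathcomp Require Import all_boot all_order all_algebra.
From mathcomp Require Import all_classical all_reals all_analysis.
Import Order.TTheory GRing.Theory Num.Theory.
Import numFieldNormedType.Exports.
Local Open Scope classical_set_scope.
Local Open Scope order_scope.

Lemma nbhs_right_itv d (K : orderTopologicalType d) (x : K) (U : set K) : nbhs x U ->
  exists c : option K, (if c is Some c' then x < c' else true) /\
    forall y, x <= y -> (if c is Some c' then y < c' else true) -> U y.
Proof.
rewrite itv_nbhsE => -[i [oi xi] iU].
move: i oi xi iU => [[[]l|[]] [[]r|[]]] //= oi; rewrite in_itv /= ?andbT => xi iU.
all: try by [].
- exists (Some r); split; first by case/andP: xi.
  move=> y xy yr; apply: iU; rewrite /= in_itv /= yr andbT.
  case/andP: xi => lx _; exact: lt_le_trans lx xy.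
- exists None; split => // y xy _; apply: iU; rewrite /= in_itv /= andbT.
  exact: lt_le_trans xi xy.
- exists (Some r); split => // y xy yr; apply: iU; by rewrite /= in_itv /= yr.
- exists None; split => // y xy _; apply: iU; by rewrite /= in_itv.
Qed.

Lemma left_closure d (K : orderTopologicalType d) (a x : K) :
  a < x -> ~ (exists p, is_pred p x) -> closure [set y | y < x] x.
Proof.
move=> ax np B; rewrite itv_nbhsE => -[i [oi xi] iU].
have H : forall l, l < x -> exists z, l < z /\ z < x.
  move=> l lx; apply: contrapT => nz; apply: np; exists l; split => // y [ly yx].
  by apply: nz; exists y.
move: i oi xi iU => [[[]l|[]] [[]r|[]]] //= oi; rewrite in_itv /= ?andbT => xi iU.
all: try by [].
- case/andP: xi => lx xr; have [z [lz zx]] := H _ lx.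
  exists z; split => //; apply: iU; rewrite /= in_itv /= lz /=; exact: lt_trans zx xr.
- have [z [lz zx]] := H _ xi.
  exists z; split => //; apply: iU; by rewrite /= in_itv /= lz.
- exists a; split => //; apply: iU; rewrite /= in_itv /=; exact: lt_trans ax xi.
- exists a; split => //; apply: iU; by rewrite /= in_itv.
Qed.
Theorem lemma5p3 (d : Order.disp_t) (K : orderTopologicalType d) (R : realType)
  (a b : K) (hcompact : compact [set: K])
  (hmin : forall x : K, a <= x) (hmax : forall x : K, x <= b) (hab : a < b)
  (G : K -> R) (hG : amenable a b G) :
  LG a G @ right_filter a --> G a.
Proof.
move: hG => [[hreg hrd] hrc].
have hGa := hrc a hab.
apply/cvgrPdist_le => e e0.
move/cvgrPdist_le: hGa => /(_ e e0).
rewrite /right_filter near_withinE.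
move=> /nbhs_right_itv [c [ac cU]].
rewrite near_withinE.
pose V y := if c is Some c' then y < c' else true.
have hV : nbhs a V.
  rewrite itv_nbhsE /V; move: ac; case: (c) => [c'|] ac /=.
    by exists `]-oo, c'[%O; [split=> //; rewrite in_itv | move=> z /=; rewrite in_itv].
  by exists `]-oo, +oo[%O; [split=> //; rewrite in_itv | move=> z /=].
have Vmono : forall z y, z <= y -> V y -> V z.
  rewrite /V; case: (c) => // c' z y zy yc; exact: le_lt_trans zy yc.
have hz : forall z, a < z -> V z -> (`|G a - G z| <= e)%R.
  by move=> z az Vz; apply: cU => //; exact: ltW.
near=> y => ay.
have Vy : V y by near: y.
rewrite /LG (gt_eqF ay).
case: pselect => [hp|np].
  have [py _] := xgetPex a hp.
  set p := xget a _ in py *.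
  case: (eqVneq p a) => [->|pa]; first by rewrite subrr normr0 ltW.
  have ap : a < p by rewrite lt_neqAle eq_sym pa hmin.
  by apply: hz => //; apply: Vmono (ltW py) Vy.
have cv := hreg y (conj ay np).
have PF : ProperFilter (left_filter y) := @within_nbhs_proper _ _ _ (@left_closure _ _ a y ay np).
apply: (closed_cvg (fun r => `|G a - r| <= e)%R _ _ _ cv).
  by have := @closed_ball_closed _ _ (G a) e; rewrite closed_ballE.
rewrite /left_filter near_withinE.
have : nbhs y (fun z => a < z).
  by rewrite itv_nbhsE; exists `]a, +oo[%O; [split=> //; rewrite in_itv /= andbT | move=> z /=; rewrite in_itv /= andbT].
apply: filterS => z /= az zy.
by apply: hz => //; apply: Vmono (ltW zy) Vy.
Unshelve. all: by end_near.
Qed.
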